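(* Let $\mathbb{F}_q$ have characteristic $p\neq 2$, let $f(X)=aX^2+c\in\mathbb{F}_q[X]$ with $a\neq0$, let $r\ge 1$, and suppose $f^i(0)\neq f^j(0)$ for all $0\le i<j\le r$. Then for every $0\le j\le r-1$, writing $D=2^j$ and $F^j(U,W)=W^Df^j(U/W)$, the gradient of the form $F^j(U,W)+F^j(V,W)$ vanishes at no point $(u,v,w)\neq(0,0,0)$ of $\overline{\mathbb{F}_q}^{\,3}$; consequently the polynomial $f^j(X)+f^j(Y)$ is absolutely irreducible (irreducible over $\overline{\mathbb{F}_q}$).
   Context: The iterates are $f^0(X)=X$, $f^{j+1}(X)=f(f^j(X))$; $\overline{\mathbb{F}_q}$ is an algebraic closure of $\mathbb{F}_q$. *)

(* Defs.v *)
From HB Require Import structures.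
From mathcomp Require Import all_boot all_order all_algebra all_field.
Set Implicit Arguments. Unset Strict Implicit. Unset Printing Implicit Defensive.
Import GRing.Theory.
Local Open Scope ring_scope.

Definition piter (R : nzRingType) (f : {poly R}) (j : nat) : {poly R} :=
  iter j (fun g => f \Po g) 'X.

(* Bivariate polynomials are {poly {poly R}}; following polyXY, the outer
   variable is evaluated first: P.[x, y] = P.[x%:P].[y].  *)

(* Homogenisation F(U,W) = W^D p(U/W) (meant for size p <= D.+1), as a
   bivariate polynomial with outer variable U and inner variable W. *)
Definition homog (R : nzRingType) (D : nat) (p : {poly R}) : {poly {poly R}} :=
  \sum_(i < D.+1) (p`_i *: 'X^(D - i))%:P * 'X^i.

Definition dOuter (R : nzRingType) (P : {poly {poly R}}) : {poly {poly R}} :=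
  P^`().
Definition dInner (R : nzRingType) (P : {poly {poly R}}) : {poly {poly R}} :=
  map_poly (@deriv R) P.

(* Irreducibility in L[X,Y]: non-constant, and any factorisation has a
   constant factor (units of L[X,Y] are the nonzero constants). *)
Definition bconst (R : nzRingType) (P : {poly {poly R}}) : bool :=
  P == ((P`_0)`_0)%:P%:P.
Definition irreducible2 (R : nzRingType) (P : {poly {poly R}}) : Prop :=
  ~~ bconst P /\ forall A B : {poly {poly R}}, P = A * B -> bconst A \/ bconst B.

(* Main.v *)
Require Import Defs.
From HB Require Import structures.
From mathcomp Require Import all_boot all_order all_algebra all_field.
From mathcomp Require Import ring zify.
Import GRing.Theory.
Local Open Scope ring_scope.

Lemma piterS (R : nzRingType) (f : {poly R}) j : piter f j.+1 = f \Po piter f j.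
Proof. by []. Qed.

Lemma crit (F : fieldType) (L : fieldType) (iota : {rmorphism F -> L}) (a c : F) :
  2%:R != 0 :> L -> iota a != 0 ->
  forall j (x : L), (map_poly iota (piter (a *: 'X^2 + c%:P) j))^`().[x] = 0 ->
  exists m, (0 < m <= j)%N /\
    (map_poly iota (piter (a *: 'X^2 + c%:P) j)).[x] = iota (piter (a *: 'X^2 + c%:P) m).[0].
Proof.
move=> two0 a0; elim=> [|j IH] x.
  rewrite /piter /= map_polyX derivX hornerC => /eqP; by rewrite oner_eq0.
rewrite piterS map_comp_poly deriv_comp hornerM !horner_comp => /eqP.
rewrite mulf_eq0 => /orP[|/eqP/IH [m [/andP[m0 mj] ->]]]; last first.
  exists m.+1; split; first by rewrite /= ltnS mj.
  by rewrite horner_map /= -horner_comp -piterS.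
set q := map_poly iota (piter _ j).
rewrite rmorphD /= map_polyZ map_polyXn map_polyC /= derivD derivZ derivXn derivC.
rewrite !(hornerD, hornerZ, hornerMn, hornerX, hornerC) /=.
rewrite addr0 mulf_eq0 (negPf a0) /= -mulr2n -mulr_natl mulf_eq0 (negPf two0) /= => /eqP q0.
exists 1%N; split => //.
rewrite q0 /piter /= comp_polyXr !hornerE /=.
rewrite rmorphD rmorphM /=.
by rewrite !rmorph0 !mulr0.
Qed.

Lemma affine (F : fieldType) (L : fieldType) (iota : {rmorphism F -> L}) (a c : F) (r : nat) :
  2%:R != 0 :> F -> a != 0 ->
  (forall i j : nat, (i < j <= r)%N ->
     (piter (a *: 'X^2 + c%:P) i).[0] != (piter (a *: 'X^2 + c%:P) j).[0]) ->
  forall j, (j < r)%N -> forall x y : L,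
  let g := map_poly iota (piter (a *: 'X^2 + c%:P) j) in
  g^`().[x] = 0 -> g^`().[y] = 0 -> g.[x] + g.[y] != 0.
Proof.
move=> two0 a0 hyp j jr x y g gx gy.
have two0L : 2%:R != 0 :> L by rewrite -(rmorph_nat iota) fmorph_eq0.
have a0L : iota a != 0 by rewrite fmorph_eq0.
have [m [/andP[m0 mj] ->]] := @crit _ _ iota a c two0L a0L _ _ gx.
have [n [/andP[n0 nj] ->]] := @crit _ _ iota a c two0L a0L _ _ gy.
rewrite -rmorphD fmorph_eq0; apply/negP => /eqP s0.
set f := a *: 'X^2 + c%:P in hyp s0.
have fN z : f.[- z] = f.[z] by rewrite /f !(hornerD, hornerZ, hornerXn, hornerC) sqrrN.
have eqS : (piter f m.+1).[0] = (piter f n.+1).[0].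
  rewrite !piterS !horner_comp.
  by move/eqP: s0; rewrite addr_eq0 => /eqP ->; rewrite fN.
have [mn|nm|mn] := ltngtP m n.
- have := hyp m.+1 n.+1; rewrite ltnS mn /= eqS eqxx => /(_ (leq_ltn_trans nj jr)).
  by [].
- have := hyp n.+1 m.+1; rewrite ltnS nm /= eqS eqxx => /(_ (leq_ltn_trans mj jr)).
  by [].
- move/eqP: s0; rewrite mn -mulr2n -mulr_natl mulf_eq0 (negPf two0) /= => /eqP z0.
  have := hyp 0%N n; rewrite n0 (leq_trans nj (ltnW jr)) z0 /piter /= hornerX eqxx.
  by move/(_ isT).
Qed.

Lemma size_f (F : fieldType) (a c : F) : a != 0 -> size (a *: 'X^2 + c%:P) = 3%N.
Proof.
move=> a0; rewrite size_polyDl size_scale // ?size_polyXn //.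
by rewrite (leq_ltn_trans (size_polyC_leq1 _)).
Qed.

Lemma size_piter (F : fieldType) (a c : F) : a != 0 -> forall j,
  size (piter (a *: 'X^2 + c%:P) j) = (2 ^ j).+1.
Proof.
move=> a0; elim=> [|j IH]; first by rewrite /piter /= size_polyX.
have nz : piter (a *: 'X^2 + c%:P) j.+1 != 0.
  rewrite piterS comp_poly_eq0 ?IH ?ltnS ?expn_gt0 //.
  by rewrite -size_poly_eq0 size_f.
by rewrite (polySpred nz) piterS size_comp_poly IH size_f //= expnS.
Qed.


Lemma size_deriv_le {R : nzRingType} (p : {poly R}) : (size p^`() <= size p)%N.
Proof. by have [->|p0] := eqVneq p 0; [rewrite deriv0 | exact/ltnW/lt_size_deriv]. Qed.

Lemma size_map_le {R S : nzRingType} (f : R -> S) (p : {poly R}) :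
  (size (map_poly f p) <= size p)%N.
Proof. by rewrite /map_poly; exact: size_poly. Qed.

Lemma eval2_wide {L : comNzRingType} (P : {poly {poly L}}) N u w :
  (size P <= N)%N -> P.[u, w] = \sum_(i < N) (P`_i).[w] * u ^+ i.
Proof.
move=> sP; rewrite (horner_coef_wide _ sP) horner_sum; apply: eq_bigr => i _.
by rewrite hornerM -rmorphXn hornerC.
Qed.

Lemma homogE (L : nzRingType) D (p : {poly L}) :
  homog D p = \poly_(i < D.+1) (p`_i *: 'X^(D - i)).
Proof. by rewrite /homog poly_def; apply: eq_bigr => i _; rewrite mul_polyC. Qed.

Lemma dOuter_eval (L : fieldType) D (p : {poly L}) x w :
  (0 < D)%N -> (size p <= D.+1)%N ->
  (dOuter (homog D p)).[x * w, w] = w ^+ D.-1 * p^`().[x].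
Proof.
move=> D0 sp.
have sH : (size (dOuter (homog D p)) <= D.+1)%N.
  by rewrite /dOuter (leq_trans (size_deriv_le _)) // homogE size_poly.
rewrite (eval2_wide _ _ _ _ sH) (horner_coef_wide _ (leq_trans (size_deriv_le _) sp)).
rewrite mulr_sumr; apply: eq_bigr => i _.
rewrite /dOuter !coef_deriv homogE coef_poly ltnS.
have [iD|iD] := leqP i.+1 D.
  rewrite hornerMn hornerZ hornerXn exprMn.
  have -> : w ^+ D.-1 = w ^+ (D - i.+1) * w ^+ i by rewrite -exprD; congr (_ ^+ _); lia.
  ring.
by rewrite hornerMn horner0 mul0rn mul0r nth_default ?mul0rn ?mul0r ?mulr0 // (leq_trans sp).
Qed.

Lemma coefXderiv {L : nzRingType} (p : {poly L}) i : ('X * p^`())`_i = p`_i *+ i.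
Proof. by rewrite coefXM; case: i => [|i] //=; rewrite coef_deriv. Qed.

Lemma dInner_eval (L : fieldType) D (p : {poly L}) x w :
  (0 < D)%N -> (size p <= D.+1)%N ->
  (dInner (homog D p)).[x * w, w] = w ^+ D.-1 * (D%:R * p.[x] - x * p^`().[x]).
Proof.
move=> D0 sp.
have sH : (size (dInner (homog D p)) <= D.+1)%N.
  by rewrite /dInner (leq_trans (size_map_le _ _)) // homogE size_poly.
have sXp : (size ('X * p^`())%R <= D.+1)%N.
  have [->|p0] := eqVneq p 0; first by rewrite deriv0 mulr0 size_poly0.
  rewrite (leq_trans (size_polyMleq _ _)) // size_polyX /= (leq_trans _ sp) //.
  exact: lt_size_deriv.
have -> : x * p^`().[x] = ('X * p^`()).[x] by rewrite hornerM hornerX.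
rewrite (eval2_wide _ _ _ _ sH) (horner_coef_wide _ sXp) (horner_coef_wide _ sp).
rewrite mulr_sumr -sumrB mulr_sumr; apply: eq_bigr => i _.
rewrite /dInner coef_map_id0 ?deriv0 // homogE coef_poly ltn_ord coefXderiv.
rewrite derivZ derivXn hornerZ hornerMn hornerXn exprMn.
have iD : (i <= D)%N by rewrite -ltnS.
have [iD'|iD'] := ltnP i D.
  have -> : w ^+ D.-1 = w ^+ (D - i).-1 * w ^+ i.
    rewrite -exprD; congr (_ ^+ _).
    by move: iD'; clear; lia.
  have h : (D - i)%:R = D%:R - i%:R :> L by rewrite natrB // ltnW.
  rewrite -[_ *+ (D - i)]mulr_natr h -[p`_i *+ i]mulr_natr; ring.
have -> : i = D :> nat by apply/eqP; rewrite eqn_leq iD iD'.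
rewrite subnn mulr0n mulr0 mul0r -[p`_D *+ D]mulr_natr; ring.
Qed.

Lemma dOuter_eval0 (L : fieldType) D (p : {poly L}) u :
  (0 < D)%N -> (size p <= D.+1)%N ->
  (dOuter (homog D p)).[u, 0] = (p`_D *+ D) * u ^+ D.-1.
Proof.
move=> D0 sp.
have sH : (size (dOuter (homog D p)) <= D.+1)%N.
  by rewrite /dOuter (leq_trans (size_deriv_le _)) // homogE size_poly.
have lt : (D.-1 < D.+1)%N by rewrite (leq_ltn_trans (leq_pred D)).
rewrite (eval2_wide _ _ _ _ sH) (bigD1 (Ordinal lt)) //= big1 ?addr0 => [|i /eqP ni].
  rewrite /dOuter coef_deriv homogE coef_poly prednK // ltnSn.
  by rewrite hornerMn hornerZ hornerXn subnn expr0 mulr1.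
rewrite /dOuter coef_deriv homogE coef_poly hornerMn.
case: ifP => iD; last by rewrite horner0 mul0rn mul0r.
rewrite hornerZ hornerXn expr0n.
have -> : (D - i.+1 == 0)%N = false.
  apply/negbTE/negP => /eqP h; apply: ni; apply: val_inj => /=.
  move: h iD; clear; lia.
by rewrite mulr0 mul0rn mul0r.
Qed.


Lemma partA (F : fieldType) (L : fieldType) (iota : {rmorphism F -> L}) (a c : F) (r : nat) :
  2%:R != 0 :> F -> a != 0 ->
  (forall i j : nat, (i < j <= r)%N ->
     (piter (a *: 'X^2 + c%:P) i).[0] != (piter (a *: 'X^2 + c%:P) j).[0]) ->
  forall j : nat, (j < r)%N ->
    let g : {poly L} := map_poly iota (piter (a *: 'X^2 + c%:P) j) in
    let Fj := homog (2 ^ j) g in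
    (forall u v w : L, (u, v, w) != (0, 0, 0) ->
       ~ [/\ (dOuter Fj).[u, w] = 0, (dOuter Fj).[v, w] = 0
           & (dInner Fj).[u, w] + (dInner Fj).[v, w] = 0]).
Proof.
move=> two0 a0 hyp j jr g Fj u v w nz [h1 h2 h3].
have sg : size g = (2 ^ j).+1 by rewrite /g size_map_poly size_piter.
have D0 : (0 < 2 ^ j)%N by rewrite expn_gt0.
have sg' : (size g <= (2 ^ j).+1)%N by rewrite sg.
have two0L : 2%:R != 0 :> L by rewrite -(rmorph_nat iota) fmorph_eq0.
have DL : (2 ^ j)%:R != 0 :> L by rewrite natrX expf_neq0.
have gD : g`_(2 ^ j) != 0.
  by have := lead_coef_eq0 g; rewrite lead_coefE sg /= => ->; rewrite -size_poly_eq0 sg.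
have [w0|w0] := eqVneq w 0.
  move: h1 h2; rewrite /Fj w0 !dOuter_eval0 // => /eqP h1 /eqP h2.
  move: h1 h2; rewrite !mulf_eq0 -mulr_natr !mulf_eq0 (negPf gD) (negPf DL) /=.
  rewrite !expf_eq0; case: (ltnP 0 (2 ^ j).-1) => /= [_ /eqP u0 /eqP v0|].
    by move: nz; rewrite u0 v0 w0 eqxx.
  by [].
have eu : u = u / w * w by rewrite divfK.
have ev : v = v / w * w by rewrite divfK.
move: h1 h2 h3; rewrite /Fj eu ev !dOuter_eval // !dInner_eval //.
have wD : w ^+ (2 ^ j).-1 != 0 by rewrite expf_neq0.
move=> /eqP; rewrite mulf_eq0 (negPf wD) /= => /eqP gx.
move=> /eqP; rewrite mulf_eq0 (negPf wD) /= => /eqP gy.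
rewrite gx gy !mulr0 !subr0 -mulrDr => /eqP; rewrite mulf_eq0 (negPf wD) /=.
rewrite -mulrDr mulf_eq0 (negPf DL) /=.
by apply/negP; apply: (@affine _ _ iota a c r).
Qed.


Definition good {L : nzRingType} (p : {poly {poly L}}) := forall n, (size (p`_n)%R <= n.+1)%N.

Lemma good0 {L : nzRingType} : good (0 : {poly {poly L}}).
Proof. by move=> n; rewrite coef0 size_poly0. Qed.

Lemma goodD {L : nzRingType} (p q : {poly {poly L}}) : good p -> good q -> good (p + q).
Proof.
by move=> gp gq n; rewrite coefD (leq_trans (size_polyD _ _)) // geq_max gp gq.
Qed.

Lemma goodN {L : nzRingType} (p : {poly {poly L}}) : good p -> good (- p).
Proof. by move=> gp n; rewrite coefN size_polyN; exact: gp. Qed.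

Lemma good_sum {L : nzRingType} (I : finType) (F : I -> {poly {poly L}}) :
  (forall i, good (F i)) -> good (\sum_i F i).
Proof.
move=> gF; apply: (big_ind good) => //; [exact: good0 | exact: goodD].
Qed.

Lemma goodM {L : nzRingType} (p q : {poly {poly L}}) : good p -> good q -> good (p * q).
Proof.
move=> gp gq n; rewrite coefM (leq_trans (size_sum _ _ _)) //.
apply/bigmax_leqP => i _; rewrite (leq_trans (size_polyMleq _ _)) //.
have := gp i; have := gq (n - i)%N; have := ltn_ord i; clear; lia.
Qed.

Lemma good1 {L : nzRingType} : good (1 : {poly {poly L}}).
Proof. by move=> n; rewrite coef1; case: (n == 0)%N; rewrite ?size_poly1 ?size_poly0. Qed.

Lemma goodX {L : nzRingType} : good ('X : {poly {poly L}}).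
Proof. by move=> n; rewrite coefX; case: (n == 1)%N; rewrite ?size_poly1 ?size_poly0. Qed.

Lemma goodC {L : nzRingType} (c : {poly L}) : (size c <= 1)%N -> good c%:P.
Proof. by move=> sc n; rewrite coefC; case: (n == 0)%N; rewrite ?size_poly0 // (leq_trans sc). Qed.

Lemma goodT {L : nzRingType} : good ('X * ('X : {poly L})%:P).
Proof.
move=> n; rewrite coefMC coefX; case: (eqVneq n 1%N) => [->|_].
  by rewrite mul1r size_polyX.
by rewrite mul0r size_poly0.
Qed.

Lemma good_exp {L : nzRingType} (p : {poly {poly L}}) k : good p -> good (p ^+ k).
Proof.
by move=> gp; elim: k => [|k IH]; [rewrite expr0; exact: good1 | rewrite exprS; exact: goodM].
Qed.

Definition TT (L : comNzRingType) : {poly {poly L}} := 'X * ('X : {poly L})%:P.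

Lemma cfu (L : comNzRingType) : commr_rmorph (polyC \o polyC : L -> {poly {poly L}}) (TT L).
Proof. by move=> c; rewrite /GRing.comm mulrC. Qed.
Definition phi (L : comNzRingType) : {rmorphism {poly L} -> {poly {poly L}}} := horner_morph (cfu L).
Lemma cfu2 (L : comNzRingType) : commr_rmorph (phi L) 'X.
Proof. by move=> c; rewrite /GRing.comm mulrC. Qed.
Definition psi (L : comNzRingType) : {rmorphism {poly {poly L}} -> {poly {poly L}}} := horner_morph (cfu2 L).

Lemma phiE (L : comNzRingType) (q : {poly L}) :
  phi L q = \sum_(k < size q) (q`_k)%:P%:P * TT L ^+ k.
Proof.
have -> : phi L q = (map_poly (polyC \o polyC) q).[TT L] by [].
rewrite horner_coef size_map_inj_poly; last by [].
  by apply: eq_bigr => k _; rewrite coef_map.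
by move=> x y /= /polyC_inj /polyC_inj.
Qed.

Lemma psiE (L : comNzRingType) (Q : {poly {poly L}}) :
  psi L Q = \sum_(i < size Q) phi L Q`_i * 'X ^+ i.
Proof.
have -> : psi L Q = (map_poly (phi L) Q).['X] by [].
rewrite (@horner_coef_wide _ (size Q)) ?size_map_le //.
by apply: eq_bigr => k _; rewrite coef_map.
Qed.

Lemma good_phi (L : comNzRingType) (q : {poly L}) : good (phi L q).
Proof.
rewrite phiE; apply: good_sum => k; apply: goodM; last by apply: good_exp; exact: goodT.
by apply: goodC; rewrite size_polyC_leq1.
Qed.

Lemma good_psi (L : comNzRingType) (Q : {poly {poly L}}) : good (psi L Q).
Proof.
rewrite psiE; apply: good_sum => k; apply: goodM; first exact: good_phi.
by apply: good_exp; exact: goodX.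
Qed.

Lemma phiC (L : comNzRingType) (c : L) : phi L c%:P = c%:P%:P.
Proof. exact: (horner_morphC (cfu L) c). Qed.

Lemma psiC (L : comNzRingType) (q : {poly L}) : psi L q%:P = phi L q.
Proof. exact: (horner_morphC (cfu2 L) q). Qed.

Lemma psiX (L : comNzRingType) : psi L 'X = 'X.
Proof. exact: (horner_morphX (cfu2 L)). Qed.

Lemma psi_eval0 (L : comNzRingType) (Q : {poly {poly L}}) :
  map_poly (horner_eval 0) (psi L Q) = map_poly (horner_eval 0) Q.
Proof.
have e0phi q : map_poly (horner_eval 0) (phi L q) = (q.[0])%:P.
  rewrite phiE rmorph_sum horner_coef rmorph_sum; apply: eq_bigr => k _.
  rewrite rmorphM rmorphXn /= /TT rmorphM /= map_polyX map_polyC /=.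
  by rewrite map_polyC /= !horner_evalE hornerX hornerC polyC0 mulr0 polyCM rmorphXn /= polyC0.
rewrite psiE rmorph_sum; under eq_bigr => i _ do rewrite rmorphM rmorphXn /= map_polyX e0phi.
rewrite [in RHS]/map_poly poly_def; apply: eq_bigr => i _.
by rewrite mul_polyC.
Qed.

Lemma size_psi_ge (L : comNzRingType) (Q : {poly {poly L}}) (al : L) :
  lead_coef Q = al%:P -> al != 0 -> (size Q <= size (psi L Q))%N.
Proof.
move=> lQ al0; rewrite -(size_map_poly_id0 (f := horner_eval 0)); last first.
  by rewrite lQ /= horner_evalE hornerC.
by rewrite -psi_eval0 size_map_le.
Qed.

Lemma natA x y n : (x <= n.+1)%N -> (y <= n.+1)%N -> (x - y.-1 <= (n.+1 - y).+1)%N.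
Proof. lia. Qed.
Lemma natB y n j : (1 < y)%N -> (n <= j)%N -> (j < n.+1 - y)%N = false.
Proof. move=> *; apply/negbTE; lia. Qed.
Lemma natC y n : (y <= n.+1)%N -> (1 < y)%N -> (n - (n.+1 - y) = y.-1)%N.
Proof. lia. Qed.
Lemma natD y n j : (n <= j)%N -> j != n -> (y <= n.+1)%N -> (y <= j - (n.+1 - y))%N.
Proof. move=> *; lia. Qed.
Lemma natE n j : (n <= j)%N -> j != n -> (n.+1 <= j)%N.
Proof. move=> *; lia. Qed.

Lemma descent (L : fieldType) (pa pb : {poly {poly L}}) :
  good pa -> good pb -> size (lead_coef pa) = size pa -> coprimep (lead_coef pa) (lead_coef pb) ->
  (1 < size pa)%N -> (1 < size pb)%N ->
  forall u v, good u -> good v -> u * pa + v * pb = 1 -> False.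
Proof.
move=> gpa gpb sa cop pa1 pb1 u v.
have pa0 : pa != 0 by rewrite -size_poly_eq0 -lt0n ltnW.
have pb0 : pb != 0 by rewrite -size_poly_eq0 -lt0n ltnW.
elim: (size v) {-2}v (leqnn (size v)) u => [|n IH] {}v sv u gu gv e.
  move: sv; rewrite leqn0 size_poly_eq0 => /eqP v0; move: e.
  rewrite v0 mul0r addr0 => e.
  have u0 : u != 0 by apply: contra_eq_neq e => ->; rewrite mul0r eq_sym oner_neq0.
  have su : (0 < size u)%N by rewrite lt0n size_poly_eq0.
  have := congr1 (fun p : {poly {poly L}} => size p) e.
  rewrite /= size_mul // -(prednK su) addSn /= size_poly1 => h.
  have := leq_trans pa1 (leq_addl (size u).-1 _); by rewrite h.
have [svn|svn] := leqP (size v) n; first exact: (IH v svn u gu gv e).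
have sv1 : size v = n.+1 by apply/eqP; rewrite eqn_leq sv svn.
have v0 : v != 0 by rewrite -size_poly_eq0 sv1.
set a := lead_coef pa; set b := lead_coef pb; set lv := lead_coef v.
have svb : (1 < size (v * pb)%R)%N.
  by rewrite size_mul // sv1 addSn /=; exact: leq_trans pb1 (leq_addl n _).
have eu : u * pa = - (v * pb) + 1 by rewrite -e; ring.
have lu : lead_coef u * a = - (lv * b).
  rewrite -lead_coefM eu lead_coefDl ?lead_coefN ?lead_coefM //.
  by rewrite size_polyN size_poly1.
have alv : a %| lv.
  rewrite -(Gauss_dvdpl _ cop) -dvdpNr -lu; exact: dvdp_mulIr.
have lv0 : lv != 0 by rewrite lead_coef_eq0.
have a0 : a != 0 by rewrite lead_coef_eq0.
have slv : (size lv <= n.+1)%N by rewrite /lv lead_coefE sv1; exact: gv.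
have sale : (size pa <= n.+1)%N by rewrite -sa (leq_trans (dvdp_leq lv0 alv)).
set k := (n.+1 - size pa)%N.
set h := lv %/ a.
have hE : h * a = lv by rewrite divpK.
set w := h%:P * 'X^k.
have gw : good w.
  move=> i; rewrite /w coefCM coefXn; case: (eqVneq i k) => [->|_]; last by rewrite mulr0 size_poly0.
  rewrite mulr1 /h size_divp // sa; exact: natA _ _ _ slv sale.
have ew : (u + w * pb) * pa + (v - w * pa) * pb = 1.
  by rewrite -e; ring.
apply: (IH (v - w * pa) _ (u + w * pb)); last exact: ew.
- apply/leq_sizeP => j jn; rewrite coefB /w -mulrA coefCM coefXnM.
  rewrite /k (natB _ _ _ pa1 jn).
  have [jn'|jn'] := eqVneq j n.
    rewrite jn' (natC _ _ sale pa1) -lead_coefE -/a hE /lv lead_coefE sv1 /=.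
    exact: subrr.
  rewrite !nth_default ?mulr0 ?subrr // ?sv1.
  + apply: (natD _ _ _ jn jn' sale).
  + apply: (natE _ _ jn jn').
- exact: goodD _ _ gu (goodM _ _ gw gpb).
- exact: goodD _ _ gv (goodN _ (goodM _ _ gw gpa)).
Qed.


Lemma natF (x y z w : nat) : (x <= z)%N -> (y <= w)%N -> ((x + y).-1 = (z + w).-1)%N -> (0 < x)%N -> (0 < y)%N -> x = z.
Proof. lia. Qed.

Lemma psiP (L : comNzRingType) (g : {poly L}) D : size g = D.+1 ->
  psi L (g^:P + g%:P) = \poly_(i < D.+1) (g`_i *: (1 + 'X^i)).
Proof.
move=> sg; rewrite rmorphD /= psiC psiE phiE size_map_polyC sg -big_split /= poly_def.
apply: eq_bigr => i _; rewrite coef_map /= phiC /TT exprMn -rmorphXn /=.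
rewrite -mul_polyC scalerDr -!mul_polyC mulr1 !rmorphD !rmorphM /=; ring.
Qed.

Lemma sizeP_lead (L : fieldType) (g : {poly L}) D : size g = D.+1 -> (0 < D)%N ->
  size (g^:P + g%:P) = D.+1 /\ lead_coef (g^:P + g%:P) = (lead_coef g)%:P.
Proof.
move=> sg D0.
have lt : (size g%:P < size g^:P)%N.
  by rewrite size_map_polyC sg (leq_ltn_trans (size_polyC_leq1 _)).
rewrite size_polyDl // lead_coefDl // size_map_polyC sg; split => //.
by rewrite lead_coef_map_eq // polyC_eq0 lead_coef_eq0 -size_poly_eq0 sg.
Qed.

Lemma evalP (L : fieldType) (g : {poly L}) x : (g^:P + g%:P).[x%:P] = (g.[x])%:P + g.
Proof. by rewrite hornerD hornerC horner_map. Qed.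

Lemma derivP (L : fieldType) (g : {poly L}) : (g^:P + g%:P)^`() = (g^`())^:P.
Proof. by rewrite derivD derivC addr0 deriv_map. Qed.

Lemma noCZ (L : fieldType) (g : {poly L}) (A B : {poly {poly L}}) :
  (forall x y, g^`().[x] = 0 -> g^`().[y] = 0 -> g.[x] + g.[y] != 0) ->
  g^:P + g%:P = A * B -> forall x y, A.[x%:P].[y] = 0 -> B.[x%:P].[y] = 0 -> False.
Proof.
move=> aff eP x y Ax By.
have e1 : g.[x] + g.[y] = 0.
  have := congr1 (fun Q => Q.[x%:P].[y]) eP; rewrite /= evalP hornerD hornerC.
  by rewrite hornerM hornerM Ax mul0r.
have e2 : g^`().[y] = 0.
  have := congr1 (fun Q => (Q.[x%:P])^`().[y]) eP; rewrite /= evalP derivD derivC add0r.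
  by rewrite hornerM derivM hornerD !hornerM Ax By !mulr0 mul0r addr0.
have e3 : g^`().[x] = 0.
  have := congr1 (fun Q => (Q^`()).[x%:P].[y]) eP; rewrite /= derivP horner_map /= hornerC.
  by rewrite derivM hornerD !hornerM hornerD !hornerM Ax By mulr0 mul0r addr0.
by move: (aff x y e3 e2); rewrite e1 eqxx.
Qed.

Lemma bezout1 (L : closedFieldType) (A B : {poly {poly L}}) (al be : L) :
  lead_coef A = al%:P -> al != 0 -> lead_coef B = be%:P -> be != 0 ->
  (1 < size A)%N -> (1 < size B)%N ->
  (forall x y, A.[x%:P].[y] = 0 -> B.[x%:P].[y] = 0 -> False) ->
  exists U V, U * A + V * B = 1.
Proof.
move=> lA al0 lB be0 sA sB ncz.
have nr y : (resultant A B).[y] != 0.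
  have hm Q x : (map_poly (horner_eval y) Q).[x] = Q.[x%:P].[y].
    by have := horner_map (horner_eval y) Q x%:P; rewrite /= !horner_evalE hornerC.
  have e := @map_resultant _ _ (horner_eval y) A B.
  rewrite lA lB in e; have {}e := e _ _.
  change (horner_eval y (resultant A B) != 0); rewrite e; last 2 first.
    by move: al0; apply: contra => /eqP h; apply/eqP; rewrite -h /= horner_evalE hornerC.
    by move: be0; apply: contra => /eqP h; apply/eqP; rewrite -h /= horner_evalE hornerC.
  apply/negP; rewrite resultant_eq0 => sg.
  have : size (gcdp (map_poly (horner_eval y) A) (map_poly (horner_eval y) B)) != 1%N.
    by rewrite neq_ltn sg orbT.
  case/closed_rootP => x; rewrite root_gcd => /andP[/eqP r1 /eqP r2].
  by apply: (ncz x y); rewrite -hm.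
have sres : size (resultant A B) == 1%N.
  apply/negPn/negP => /closed_rootP [y ry]; move: (nr y); by rewrite -rootE ry.
case/size_poly1P: sres => c c0 rc.
have [[u v] _ e] := resultant_in_ideal sA sB.
rewrite rc /= in e.
exists ((c^-1)%:P%:P * u), ((c^-1)%:P%:P * v).
by rewrite -!mulrA -mulrDr -e -!polyCM mulVf.
Qed.

Arguments sizeP_lead {L g D}.
Arguments noCZ {L g A B}.
Arguments bezout1 {L A B al be}.
Arguments size_psi_ge {L Q al}.
Arguments descent {L pa pb}.
Arguments psiP {L g D}.

Lemma natG (x y : nat) : ((x + y).-1 = 1)%N -> (0 < x)%N -> (0 < y)%N -> x = 1%N.
Proof. lia. Qed.

Lemma partB (L : closedFieldType) (g : {poly L}) D :
  size g = D.+1 -> (0 < D)%N -> D%:R != 0 :> L ->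
  (forall x y, g^`().[x] = 0 -> g^`().[y] = 0 -> g.[x] + g.[y] != 0) ->
  irreducible2 (g^:P + g%:P).
Proof.
move=> sg D0 DL aff.
have [sP lP] := sizeP_lead sg D0.
have lg0 : lead_coef g != 0 by rewrite lead_coef_eq0 -size_poly_eq0 sg.
split.
  apply/negP => /eqP h.
  have := size_polyC_leq1 (((g^:P + g%:P)`_0)`_0)%:P.
  by rewrite -h sP ltnS leqn0 => /eqP D00; move: D0; rewrite D00.
move=> A B eP.
case bA: (bconst A); first by left.
case bB: (bconst B); first by right.
exfalso.
have P0 : g^:P + g%:P != 0 by rewrite -size_poly_eq0 sP.
have A0 : A != 0 by apply: contra_neq P0; rewrite eP => ->; rewrite mul0r.
have B0 : B != 0 by apply: contra_neq P0; rewrite eP => ->; rewrite mulr0.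
have lAB : lead_coef A * lead_coef B = (lead_coef g)%:P by rewrite -lead_coefM -eP lP.
have lA0 : lead_coef A != 0 by rewrite lead_coef_eq0.
have lB0 : lead_coef B != 0 by rewrite lead_coef_eq0.
have sAB : ((size (lead_coef A) + size (lead_coef B)).-1 = 1)%N.
  by rewrite -size_mul // lAB size_polyC lg0.
have slA : size (lead_coef A) = 1%N by apply: natG sAB _ _; rewrite lt0n size_poly_eq0.
have slB : size (lead_coef B) = 1%N.
  apply: (natG _ (size (lead_coef A))); rewrite ?lt0n ?size_poly_eq0 //.
  by rewrite addnC.
case/size_poly1P: (introT eqP slA) => al al0 lA.
case/size_poly1P: (introT eqP slB) => be be0 lB.
have bc (Q : {poly {poly L}}) c : Q != 0 -> lead_coef Q = c%:P -> (size Q <= 1)%N -> bconst Q.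
  move=> Q0 lQ sQ; have eQ := size1_polyC sQ.
  have sQ1 : size Q = 1%N by apply/eqP; rewrite eqn_leq sQ lt0n size_poly_eq0.
  have : Q`_0 = c%:P by rewrite -lQ lead_coefE sQ1.
  by move=> e0; rewrite /bconst {1}eQ e0 coefC eqxx.
have sA : (1 < size A)%N by rewrite ltnNge; apply/negP => /(bc A al A0 lA); rewrite bA.
have sB : (1 < size B)%N by rewrite ltnNge; apply/negP => /(bc B be B0 lB); rewrite bB.
have ncz := noCZ aff eP.
have [U [V e]] := bezout1 lA al0 lB be0 sA sB ncz.
set pa := psi L A; set pb := psi L B.
have e2 : psi L U * pa + psi L V * pb = 1 by rewrite -!rmorphM -rmorphD e rmorph1.
have ePsi : pa * pb = \poly_(i < D.+1) (g`_i *: (1 + 'X^i)) by rewrite -rmorphM -eP (psiP sg).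
set ell := g`_D *: (1 + 'X^D) : {poly L}.
have gD : g`_D = lead_coef g by rewrite lead_coefE sg.
have s1X : size (1 + 'X^D : {poly L}) = D.+1 by rewrite addrC -polyC1 size_XnaddC.
have ell0 : ell != 0 by rewrite scaler_eq0 gD (negPf lg0) /= -size_poly_eq0 s1X.
have lpp : lead_coef pa * lead_coef pb = ell by rewrite -lead_coefM ePsi lead_coef_poly.
have spp : size (pa * pb) = D.+1 by rewrite ePsi size_poly_eq.
have sell : size ell = D.+1 by rewrite size_scale ?s1X // gD.
have spa : (size A <= size pa)%N := size_psi_ge lA al0.
have spb : (size B <= size pb)%N := size_psi_ge lB be0.
have pa0 : pa != 0 by rewrite -size_poly_eq0 -lt0n (leq_trans _ spa) // ltnW.
have pb0 : pb != 0 by rewrite -size_poly_eq0 -lt0n (leq_trans _ spb) // ltnW.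
have la0 : lead_coef pa != 0 by rewrite lead_coef_eq0.
have lb0 : lead_coef pb != 0 by rewrite lead_coef_eq0.
have gl (p : {poly {poly L}}) : p != 0 -> good p -> (size (lead_coef p) <= size p)%N.
  by move=> p0 gp; rewrite lead_coefE (leq_trans (gp _)) // prednK // lt0n size_poly_eq0.
have sla : size (lead_coef pa) = size pa.
  apply: (natF _ (size (lead_coef pb)) _ (size pb)).
  - exact: gl pa0 (good_psi _ _).
  - exact: gl pb0 (good_psi _ _).
  - by rewrite -!size_mul // lpp spp sell.
  - by rewrite lt0n size_poly_eq0.
  - by rewrite lt0n size_poly_eq0.
have cop : coprimep (lead_coef pa) (lead_coef pb).
  apply: Pdiv.ClosedField.root_coprimep => x /eqP ra; apply/eqP => rb.
  have h1 : ell.[x] = 0 by rewrite -lpp hornerM ra mul0r.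
  have h2 : ell^`().[x] = 0.
    by rewrite -lpp derivM hornerD !hornerM ra rb mulr0 mul0r addr0.
  move: h2; rewrite /ell derivZ derivD derivC add0r derivXn hornerZ hornerMn hornerXn.
  move/eqP; rewrite mulf_eq0 gD (negPf lg0) /= -mulr_natr mulf_eq0 (negPf DL) orbF.
  rewrite expf_eq0 => /andP[_ /eqP x0].
  move: h1; rewrite /ell hornerZ hornerD hornerC hornerXn x0 expr0n.
  have -> : (D == 0)%N = false by apply/negbTE; rewrite -lt0n.
  by rewrite addr0 mulr1 gD => /eqP; rewrite (negPf lg0).
apply: (descent (good_psi _ A) (good_psi _ B) sla cop _ _ (psi L U) (psi L V)
          (good_psi _ _) (good_psi _ _) e2).
- exact: leq_trans sA spa.
- exact: leq_trans sB spb.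
Qed.


Theorem mainTheorem6 (F : finFieldType) (L : closedFieldType)
    (iota : {rmorphism F -> L}) (a c : F) (r : nat) :
  ~~ (2%N \in [pchar F]) ->
  a != 0 ->
  (1 <= r)%N ->
  (forall i j : nat, (i < j <= r)%N ->
     (piter (a *: 'X^2 + c%:P) i).[0] != (piter (a *: 'X^2 + c%:P) j).[0]) ->
  forall j : nat, (j < r)%N ->
    let g : {poly L} := map_poly iota (piter (a *: 'X^2 + c%:P) j) in
    let Fj := homog (2 ^ j) g in
    (* gradient of G(U,V,W) = Fj(U,W) + Fj(V,W):
       (dFj/dU (u,w), dFj/dU (v,w), dFj/dW (u,w) + dFj/dW (v,w)) *)
    (forall u v w : L, (u, v, w) != (0, 0, 0) ->
       ~ [/\ (dOuter Fj).[u, w] = 0, (dOuter Fj).[v, w] = 0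
           & (dInner Fj).[u, w] + (dInner Fj).[v, w] = 0]) /\
    (* f^j(X) + f^j(Y) is irreducible over L *)
    irreducible2 (g ^:P + g%:P).
Proof.
move=> h2 a0 r1 hyp j jr g Fj.
have two0 : (2%:R : F) != 0.
  by apply: contra h2 => /eqP h; rewrite inE /= h eqxx.
split; first exact: (@partA _ _ iota a c r two0 a0 hyp j jr).
have sg : size g = (2 ^ j).+1 by rewrite /g size_map_poly size_piter.
have two0L : 2%:R != 0 :> L by rewrite -(rmorph_nat iota) fmorph_eq0.
apply: (@partB _ _ _ sg); first by rewrite expn_gt0.
  by rewrite natrX expf_neq0.
move=> x y; exact: (@affine _ _ iota a c r two0 a0 hyp j jr x y).
Qed.
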